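(* Let $(p_0,\dots,p_{n-1})$ be a closed discrete curve and let $\kappa\in\mathbb{R}\setminus\{0\}$. The following are equivalent: (1) the curve is an equilibrium of $L+\kappa\mathrm{Vol}$, i.e. $\nabla_{p_k}L+\kappa\nabla_{p_k}\mathrm{Vol}=0$ for all $k$; (2) there exist $l_0>0$ and $\theta_0\in(-\pi,\pi)$ such that $l_k=l_0$ and $\theta_k=\theta_0$ for all $k$, and $\kappa l_0=2\tan(\theta_0/2)$.
   Context: A closed discrete curve is an $n$-tuple $(p_0,\dots,p_{n-1})$ of points of $\mathbb{R}^2$ ($n\ge3$), indices modulo $n$, with $l_k:=|p_{k+1}-p_k|\ne0$ for all $k$. $R_\varphi$ denotes rotation of $\mathbb{R}^2$ by $\varphi$. Fix $R\in\{R_{\pi/2},R_{-\pi/2}\}$ and set $\sigma=+1$ if $R=R_{\pi/2}$, $\sigma=-1$ if $R=R_{-\pi/2}$. Edge normal $\nu_k:=R((p_{k+1}-p_k)/l_k)$. The signed angle $\theta_k\in(-\pi,\pi]$ at vertex $p_k$ is defined by $\nu_k=R_{\sigma\theta_k}\nu_{k-1}$. Length $L=\sum_k l_k$, area $\mathrm{Vol}=\frac12\sum_k\langle p_k,\nu_k\rangle l_k$, both functions on $(\mathbb{R}^2)^n$; $\nabla_{p_k}$ is the gradient with respect to $p_k$. *)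

(* Defs.v *)
From Stdlib Require Import Reals Lra Arith.
From Coquelicot Require Import Coquelicot.
Open Scope R_scope.

Definition pt := (R * R)%type.
Definition padd (a b : pt) : pt := (fst a + fst b, snd a + snd b).
Definition psub (a b : pt) : pt := (fst a - fst b, snd a - snd b).
Definition pscale (c : R) (a : pt) : pt := (c * fst a, c * snd a).
Definition pdot (a b : pt) : R := fst a * fst b + snd a * snd b.
Definition pnorm (a : pt) : R := sqrt (fst a ^ 2 + snd a ^ 2).

Definition rot (phi : R) (a : pt) : pt :=
  (cos phi * fst a - sin phi * snd a, sin phi * fst a + cos phi * snd a).

Fixpoint fsum (n : nat) (f : nat -> R) : R :=
  match n with O => 0 | S m => fsum m f + f m end.

(* A configuration (p_0,...,p_{n-1}) is a function P : nat -> pt of which only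
   the values on 0..n-1 are used; indices are taken modulo n. *)
Definition pidx (n : nat) (P : nat -> pt) (k : nat) : pt := P (k mod n)%nat.

Definition edge_len (n : nat) (P : nat -> pt) (k : nat) : R :=
  pnorm (psub (pidx n P (k + 1)) (pidx n P k)).

Definition closed_curve (n : nat) (P : nat -> pt) : Prop :=
  (3 <= n)%nat /\ forall k, (k < n)%nat -> edge_len n P k <> 0.

(* sigma = +1 for R = R_{pi/2}, sigma = -1 for R = R_{-pi/2};
   edge normal nu_k = R((p_{k+1}-p_k)/l_k) with R = R_{sigma pi/2} *)
Definition normal (sigma : R) (n : nat) (P : nat -> pt) (k : nat) : pt :=
  rot (sigma * (PI / 2))
      (pscale (/ edge_len n P k) (psub (pidx n P (k + 1)) (pidx n P k))).

Definition is_signed_angle (sigma : R) (n : nat) (P : nat -> pt) (k : nat)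
  (theta : R) : Prop :=
  - PI < theta <= PI /\
  normal sigma n P (k mod n)%nat
  = rot (sigma * theta) (normal sigma n P ((k + n - 1) mod n)%nat).

Definition Length (n : nat) (P : nat -> pt) : R :=
  fsum n (fun k => edge_len n P k).

Definition Vol (sigma : R) (n : nat) (P : nat -> pt) : R :=
  / 2 * fsum n (fun k => pdot (pidx n P k) (normal sigma n P k) * edge_len n P k).

Definition upd (P : nat -> pt) (k : nat) (w : pt) : nat -> pt :=
  fun j => if Nat.eqb j k then w else P j.

Definition grad_at (F : (nat -> pt) -> R) (P : nat -> pt) (k : nat) : pt :=
  (Derive (fun t => F (upd P k (padd (P k) (t, 0)))) 0,
   Derive (fun t => F (upd P k (padd (P k) (0, t)))) 0).

(* Main.v *)
Require Import Defs.
From Stdlib Require Import Reals Lra Lia.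
From Coquelicot Require Import Coquelicot.
Open Scope R_scope.

Lemma fsum_ext m f g : (forall j, (j < m)%nat -> f j = g j) -> fsum m f = fsum m g.
Proof. induction m; intros H; simpl; auto. rewrite IHm; [rewrite H|]; auto; intros; apply H; lia. Qed.

Lemma fsum_plus m f g : fsum m (fun j => f j + g j) = fsum m f + fsum m g.
Proof. induction m; simpl; [ring|]. rewrite IHm; ring. Qed.

Lemma fsum_delta m a c : (a < m)%nat -> fsum m (fun j => if Nat.eqb j a then c else 0) = c.
Proof.
  induction m; intros H; [lia|]. simpl.
  destruct (Nat.eqb_spec m a).
  - subst. rewrite (fsum_ext _ _ (fun _ => 0)). 2:{ intros j Hj. destruct (Nat.eqb_spec j a); [lia|auto]. }
    clear. assert (fsum a (fun _ => 0) = 0) by (induction a; simpl; auto; rewrite IHa; ring). lra.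
  - rewrite IHm; [ring|lia].
Qed.

Lemma is_derive_fsum m (F : nat -> R -> R) (g : nat -> R) x :
  (forall j, (j < m)%nat -> is_derive (F j) x (g j)) ->
  is_derive (fun t => fsum m (fun j => F j t)) x (fsum m g).
Proof.
  induction m; intros H; simpl.
  - apply (is_derive_const (K:=R_AbsRing) (V:=R_NormedModule)).
  - apply (is_derive_plus (fun t => fsum m (fun j => F j t)) (F m)).
    + apply IHm; intros; apply H; lia.
    + apply H; lia.
Qed.

Lemma km1_eq n k : (0 < n)%nat -> (k < n)%nat ->
  ((k + n - 1) mod n = if Nat.eqb k 0 then (n - 1) else (k - 1))%nat.
Proof.
  intros Hn Hk. destruct (Nat.eqb_spec k 0).
  - subst. apply Nat.mod_small. lia.
  - replace (k + n - 1)%nat with ((k - 1) + 1 * n)%nat by lia.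
    rewrite Nat.Div0.mod_add. apply Nat.mod_small. lia.
Qed.

Lemma succ_mod n j : (0 < n)%nat -> (j < n)%nat ->
  ((j + 1) mod n = if Nat.eqb (j + 1) n then 0 else j + 1)%nat.
Proof.
  intros Hn Hj. destruct (Nat.eqb_spec (j+1) n).
  - rewrite e. apply Nat.Div0.mod_same.
  - apply Nat.mod_small. lia.
Qed.

Lemma succ_mod_eqb n j k : (0 < n)%nat -> (j < n)%nat -> (k < n)%nat ->
  Nat.eqb ((j + 1) mod n) k = Nat.eqb j ((k + n - 1) mod n).
Proof.
  intros Hn Hj Hk. rewrite succ_mod, km1_eq by auto.
  destruct (Nat.eqb_spec (j+1) n); destruct (Nat.eqb_spec k 0);
  repeat match goal with |- context [Nat.eqb ?a ?b] => destruct (Nat.eqb_spec a b) end;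
  auto; lia.
Qed.

Lemma deriv_edge dx dy c v1 v2 : 0 < dx^2 + dy^2 ->
  is_derive (fun t => sqrt ((dx + c*t*v1)^2 + (dy + c*t*v2)^2)) 0
    (c * (dx*v1 + dy*v2) / sqrt (dx^2 + dy^2)).
Proof.
  intros H. auto_derive.
  - replace (dx + c*0*v1) with dx by ring. replace (dy + c*0*v2) with dy by ring. nra.
  - replace (dx + c*0*v1) with dx by ring. replace (dy + c*0*v2) with dy by ring.
    replace (dx * (dx * 1) + dy * (dy * 1)) with (dx^2+dy^2) by ring.
    assert (0 < sqrt (dx^2+dy^2)) by (apply sqrt_lt_R0; auto). field. lra.
Qed.

Lemma deriv_vol x y dx dy a c v1 v2 ca sa :
  is_derive (fun t => (x + a*t*v1) * (ca * (dx + c*t*v1) - sa * (dy + c*t*v2))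
                     + (y + a*t*v2) * (sa * (dx + c*t*v1) + ca * (dy + c*t*v2))) 0
    (a * (v1 * (ca*dx - sa*dy) + v2 * (sa*dx + ca*dy)) + c * (x * (ca*v1 - sa*v2) + y*(sa*v1 + ca*v2))).
Proof. auto_derive; auto. ring. Qed.

Definition ind n k i : R := if Nat.eqb (i mod n) k then 1 else 0.

Lemma pidx_upd n P k v1 v2 t i :
  pidx n (upd P k (padd (P k) (t*v1, t*v2))) i =
  (fst (pidx n P i) + ind n k i * t * v1, snd (pidx n P i) + ind n k i * t * v2).
Proof.
  unfold pidx, upd, ind. destruct (Nat.eqb_spec (i mod n) k).
  - subst. unfold padd; simpl. f_equal; ring.
  - destruct (P (i mod n)); simpl; f_equal; ring.
Qed.

Lemma pnorm_pos d : pnorm d <> 0 -> 0 < fst d ^ 2 + snd d ^ 2.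
Proof.
  unfold pnorm; intros H. destruct (Rle_lt_or_eq_dec 0 (fst d ^ 2 + snd d ^ 2)); auto.
  - nra.
  - exfalso; apply H. rewrite <- e. apply sqrt_0.
Qed.

Lemma Vol_poly sigma n Q :
  Vol sigma n Q = / 2 * fsum n (fun j => pdot (pidx n Q j)
     (rot (sigma * (PI / 2)) (psub (pidx n Q (j + 1)) (pidx n Q j)))).
Proof.
  unfold Vol. f_equal. apply fsum_ext. intros j _.
  unfold normal, edge_len. generalize (psub (pidx n Q (j + 1)) (pidx n Q j)) as d.
  intros [d1 d2]. unfold pnorm, pscale, rot, pdot; simpl.
  destruct (Req_dec (sqrt (d1 ^ 2 + d2 ^ 2)) 0) as [E|E].
  - assert (d1^2 + d2^2 = 0) by (apply sqrt_eq_0; nra || (apply Rplus_le_le_0_compat; apply pow2_ge_0); auto).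
    assert (d1 = 0) by nra. assert (d2 = 0) by nra. subst. ring.
  - field. auto.
Qed.

Section G.
Variable n : nat.
Variable P : nat -> pt.
Variable k : nat.
Hypothesis Hc : closed_curve n P.
Hypothesis Hk : (k < n)%nat.

Let km1 := ((k + n - 1) mod n)%nat.
Let d j := psub (pidx n P (j + 1)) (pidx n P j).

Lemma n_pos : (0 < n)%nat. Proof. destruct Hc; lia. Qed.
Lemma km1_lt : (km1 < n)%nat. Proof. unfold km1. apply Nat.mod_upper_bound. pose proof n_pos; lia. Qed.

Lemma ind_j j : (j < n)%nat -> ind n k j = if Nat.eqb j k then 1 else 0.
Proof. intros. unfold ind. rewrite Nat.mod_small; auto. Qed.
Lemma ind_j1 j : (j < n)%nat -> ind n k (j + 1) = if Nat.eqb j km1 then 1 else 0.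
Proof. intros. unfold ind. unfold km1. rewrite succ_mod_eqb; auto. apply n_pos. Qed.

Lemma grad_L v1 v2 :
  is_derive (fun t => Length n (upd P k (padd (P k) (t*v1, t*v2)))) 0
   ((fst (d km1) * v1 + snd (d km1) * v2) / edge_len n P km1
    - (fst (d k) * v1 + snd (d k) * v2) / edge_len n P k).
Proof.
  set (g := fun j => (ind n k (j+1) - ind n k j) * (fst (d j) * v1 + snd (d j) * v2) / edge_len n P j).
  assert (H : is_derive (fun t => Length n (upd P k (padd (P k) (t*v1, t*v2)))) 0 (fsum n g)).
  { unfold Length. apply is_derive_fsum. intros j Hj.
    eapply is_derive_ext; [| apply (deriv_edge (fst (d j)) (snd (d j)) (ind n k (j+1) - ind n k j) v1 v2)].
    - intros t. unfold edge_len, pnorm, psub. rewrite !pidx_upd. unfold d, psub; simpl. f_equal; ring.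
    - apply pnorm_pos. destruct Hc as [_ H]. apply H; auto. }
  replace (fsum n g) with (fsum n (fun j =>
     (if Nat.eqb j km1 then (fst (d km1) * v1 + snd (d km1) * v2) / edge_len n P km1 else 0)
     + (if Nat.eqb j k then - ((fst (d k) * v1 + snd (d k) * v2) / edge_len n P k) else 0))) in H.
  - pose proof km1_lt. rewrite fsum_plus, !fsum_delta in H; auto.
  - apply fsum_ext. intros j Hj. unfold g. rewrite (ind_j j Hj), (ind_j1 j Hj).
    destruct (Nat.eqb_spec j km1) as [E1|E1]; destruct (Nat.eqb_spec j k) as [E2|E2]; try subst j; try rewrite E2; unfold Rdiv; ring.
Qed.

Lemma grad_V sigma v1 v2 :
  let ca := cos (sigma * (PI / 2)) in let sa := sin (sigma * (PI / 2)) in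
  is_derive (fun t => Vol sigma n (upd P k (padd (P k) (t*v1, t*v2)))) 0
   (/ 2 * ((v1 * (ca * fst (d k) - sa * snd (d k)) + v2 * (sa * fst (d k) + ca * snd (d k)))
           + (fst (pidx n P km1) * (ca*v1 - sa*v2) + snd (pidx n P km1) * (sa*v1 + ca*v2))
           - (fst (pidx n P k) * (ca*v1 - sa*v2) + snd (pidx n P k) * (sa*v1 + ca*v2)))).
Proof.
  intros ca sa.
  set (h := fun j => ind n k j * (v1 * (ca * fst (d j) - sa * snd (d j)) + v2 * (sa * fst (d j) + ca * snd (d j)))
        + (ind n k (j+1) - ind n k j) * (fst (pidx n P j) * (ca*v1 - sa*v2) + snd (pidx n P j) * (sa*v1 + ca*v2))).
  assert (H : is_derive (fun t => Vol sigma n (upd P k (padd (P k) (t*v1, t*v2)))) 0 (/2 * fsum n h)).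
  { eapply is_derive_ext. { intros t. symmetry. apply Vol_poly. }
    apply is_derive_scal. apply is_derive_fsum. intros j Hj.
    eapply is_derive_ext; [| apply (deriv_vol (fst (pidx n P j)) (snd (pidx n P j)) (fst (d j)) (snd (d j))
          (ind n k j) (ind n k (j+1) - ind n k j) v1 v2 ca sa)].
    intros t. unfold pdot, rot, psub. rewrite !pidx_upd. unfold d, psub, ca, sa; simpl. ring. }
  replace (fsum n h) with (fsum n (fun j =>
     (if Nat.eqb j k then (v1 * (ca * fst (d k) - sa * snd (d k)) + v2 * (sa * fst (d k) + ca * snd (d k)))
         - (fst (pidx n P k) * (ca*v1 - sa*v2) + snd (pidx n P k) * (sa*v1 + ca*v2)) else 0)
     + (if Nat.eqb j km1 then (fst (pidx n P km1) * (ca*v1 - sa*v2) + snd (pidx n P km1) * (sa*v1 + ca*v2)) else 0))) in H.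
  - pose proof km1_lt. rewrite fsum_plus, !fsum_delta in H; auto.
    replace (/ 2 * _) with (/ 2 * (let ca := cos (sigma * (PI / 2)) in let sa := sin (sigma * (PI / 2)) in ((v1 * (ca * fst (d k) - sa * snd (d k)) + v2 * (sa * fst (d k) + ca * snd (d k)))
           - (fst (pidx n P k) * (ca*v1 - sa*v2) + snd (pidx n P k) * (sa*v1 + ca*v2))) + (fst (pidx n P km1) * (ca*v1 - sa*v2) + snd (pidx n P km1) * (sa*v1 + ca*v2)))); [exact H|].
    simpl. unfold ca, sa. ring.
  - apply fsum_ext. intros j Hj. unfold h. rewrite (ind_j j Hj), (ind_j1 j Hj).
    destruct (Nat.eqb_spec j km1) as [E1|E1]; destruct (Nat.eqb_spec j k) as [E2|E2]; try subst j; try rewrite E2; ring.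
Qed.
End G.

Lemma half_angle h : -PI/2 < h < PI/2 ->
  cos (2*h) * (1 + tan h ^ 2) = 1 - tan h ^ 2 /\ sin (2*h) * (1 + tan h ^ 2) = 2 * tan h.
Proof.
  intros [H1 H2]. assert (Hc : 0 < cos h) by (apply cos_gt_0; lra).
  pose proof (sin2_cos2 h) as E. unfold Rsqr in E.
  rewrite cos_2a, sin_2a. unfold tan. split; field_simplify; try lra.
  - replace (cos h ^ 4 - sin h ^ 4) with ((cos h ^ 2 - sin h ^ 2) * (sin h * sin h + cos h * cos h)) by ring.
    rewrite E. field. lra.
  - replace (2 * sin h ^ 3 + 2 * sin h * cos h ^ 2) with (2*sin h * (sin h * sin h + cos h * cos h)) by ring.
    rewrite E. field. lra.
Qed.

Lemma core1 u1 u2 w1 w2 a b e :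
  u1^2 + u2^2 = 1 -> w1^2 + w2^2 = 1 -> 0 < a -> 0 < b -> e <> 0 ->
  u1 - w1 - e * (a*u2 + b*w2) = 0 -> u2 - w2 + e * (a*u1 + b*w1) = 0 -> a = b.
Proof.
  intros Hu Hw Ha Hb He X1 X2.
  assert (K: e * ((a - b) * (u1*w2 - u2*w1)) = 0).
  { replace (e * ((a - b) * (u1*w2 - u2*w1))) with
      ((u1+w1)*(u1 - w1 - e * (a*u2 + b*w2)) + (u2+w2)*(u2 - w2 + e * (a*u1 + b*w1)) - (u1^2+u2^2) + (w1^2+w2^2)) by ring.
    rewrite X1, X2, Hu, Hw. ring. }
  apply Rmult_integral in K. destruct K as [K|K]; [contradiction|].
  apply Rmult_integral in K. destruct K as [K|K]; [lra|].
  assert (D : 1 - (u1*w1+u2*w2) = 0).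
  { replace (1 - (u1*w1+u2*w2)) with (u1*(u1 - w1 - e * (a*u2 + b*w2)) + u2*(u2 - w2 + e * (a*u1 + b*w1)) + e*b*(u1*w2-u2*w1) + (1 - (u1^2+u2^2))) by ring.
    rewrite X1, X2, K, Hu. ring. }
  assert (Q: (u1-w1)^2 + (u2-w2)^2 = 0).
  { replace ((u1-w1)^2 + (u2-w2)^2) with ((u1^2+u2^2) + (w1^2+w2^2) - 2 + 2*(1 - (u1*w1+u2*w2))) by ring.
    rewrite Hu, Hw, D. ring. }
  pose proof (pow2_ge_0 (u1-w1)). pose proof (pow2_ge_0 (u2-w2)).
  assert (Q1: (u1-w1)^2 = 0) by lra. assert (Q2: (u2-w2)^2 = 0) by lra.
  assert (u1 - w1 = 0) by (apply Rsqr_0_uniq; rewrite Rsqr_pow2; exact Q1).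
  assert (u2 - w2 = 0) by (apply Rsqr_0_uniq; rewrite Rsqr_pow2; exact Q2).
  assert (u1 = w1) by lra. assert (u2 = w2) by lra. subst w1 w2.
  assert (Y2: e*(a+b)*u2 = 0) by lra. assert (Y1: e*(a+b)*u1 = 0) by lra.
  assert (NZ: e*(a+b) <> 0). { apply Rmult_integral_contrapositive; split; lra. }
  assert (u2 = 0). { apply Rmult_integral in Y2. destruct Y2; [contradiction|auto]. }
  assert (u1 = 0). { apply Rmult_integral in Y1. destruct Y1; [contradiction|auto]. }
  subst. lra.
Qed.

Lemma core2 u1 u2 w1 w2 s sg c sn :
  sg * sg = 1 -> c * (1 + s^2) = 1 - s^2 -> sn * (1 + s^2) = 2*s ->
  u1 - w1 - sg * s * (u2 + w2) = 0 -> u2 - w2 + sg * s * (u1 + w1) = 0 ->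
  w1 = c * u1 - sg * sn * u2 /\ w2 = sg * sn * u1 + c * u2.
Proof.
  intros Hg Hc Hs X1 X2. assert (P: 0 < 1 + s^2) by nra.
  split; apply (Rmult_eq_reg_r (1 + s^2)); try lra.
  - replace ((c * u1 - sg * sn * u2) * (1 + s^2)) with ((c*(1+s^2))*u1 - sg*(sn*(1+s^2))*u2) by ring.
    rewrite Hc, Hs.
    replace (w1 * (1 + s^2)) with (w1 * (1 + s^2) + 0*(-(u1 - w1 - sg * s * (u2 + w2)) + sg*s*(u2 - w2 + sg * s * (u1 + w1)))) by ring.
    replace (w1 * (1 + s^2) + 0*(-(u1 - w1 - sg * s * (u2 + w2)) + sg*s*(u2 - w2 + sg * s * (u1 + w1))))
      with (w1 * (1 + s^2)) by ring.
    transitivity (w1 * (1 + s^2) - (-(u1 - w1 - sg * s * (u2 + w2)) + sg*s*(u2 - w2 + sg * s * (u1 + w1))) + (sg*sg - 1)*s^2*(w1+u1)).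
    + rewrite X1, X2, Hg. ring.
    + ring.
  - replace ((sg * sn * u1 + c * u2) * (1 + s^2)) with (sg*(sn*(1+s^2))*u1 + (c*(1+s^2))*u2) by ring.
    rewrite Hc, Hs.
    transitivity (w2 * (1 + s^2) - (-(u2 - w2 + sg * s * (u1 + w1)) - sg*s*(u1 - w1 - sg * s * (u2 + w2))) + (sg*sg - 1)*s^2*(w2+u2)).
    + rewrite X1, X2, Hg. ring.
    + ring.
Qed.

Lemma core3 u1 u2 w1 w2 s sg c sn :
  sg * sg = 1 -> c * (1 + s^2) = 1 - s^2 -> sn * (1 + s^2) = 2*s ->
  w1 = c * u1 - sg * sn * u2 -> w2 = sg * sn * u1 + c * u2 ->
  u1 - w1 - sg * s * (u2 + w2) = 0 /\ u2 - w2 + sg * s * (u1 + w1) = 0.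
Proof.
  intros Hg Hc Hs W1 W2. assert (P: 0 < 1 + s^2) by nra. subst w1 w2.
  split; apply (Rmult_eq_reg_r (1 + s^2)); try lra.
  - transitivity ((1+s^2)*u1 - (c*(1+s^2))*u1 + sg*(sn*(1+s^2))*u2 - sg*s*((1+s^2)*u2 + sg*(sn*(1+s^2))*u1 + (c*(1+s^2))*u2)); [ring|].
    rewrite Hc, Hs. transitivity (2*s^2*u1*(1 - sg*sg)); [ring|]. rewrite Hg; ring.
  - transitivity ((1+s^2)*u2 - sg*(sn*(1+s^2))*u1 - (c*(1+s^2))*u2 + sg*s*((1+s^2)*u1 + (c*(1+s^2))*u1 - sg*(sn*(1+s^2))*u2)); [ring|].
    rewrite Hc, Hs. transitivity (2*s^2*u2*(1 - sg*sg)); [ring|]. rewrite Hg; ring.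
Qed.

Definition Wv n P j : pt := pscale (/ edge_len n P j) (psub (pidx n P (j+1)) (pidx n P j)).
Definition km1 n k := ((k + n - 1) mod n)%nat.

Lemma grad_pair (F : (nat -> pt) -> R) P k (gx gy : R) :
  is_derive (fun t => F (upd P k (padd (P k) (t*1, t*0)))) 0 gx ->
  is_derive (fun t => F (upd P k (padd (P k) (t*0, t*1)))) 0 gy ->
  grad_at F P k = (gx, gy).
Proof.
  intros H1 H2. unfold grad_at.
  rewrite (Derive_ext _ (fun t => F (upd P k (padd (P k) (t*1, t*0))))).
  2:{ intros t. replace (t*1) with t by ring. replace (t*0) with 0 by ring. reflexivity. }
  rewrite (Derive_ext (fun t => F (upd P k (padd (P k) (0, t)))) (fun t => F (upd P k (padd (P k) (t*0, t*1))))).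
  2:{ intros t. replace (t*1) with t by ring. replace (t*0) with 0 by ring. reflexivity. }
  f_equal; apply is_derive_unique; assumption.
Qed.

Lemma km1_lt' n k : (0 < n)%nat -> (km1 n k < n)%nat.
Proof. intros. unfold km1. apply Nat.mod_upper_bound. lia. Qed.

Lemma pidx_km1 n P k : (0 < n)%nat -> (k < n)%nat -> pidx n P (km1 n k + 1) = pidx n P k.
Proof.
  intros Hn Hk. unfold pidx. f_equal. rewrite (Nat.mod_small k) by auto.
  pose proof (succ_mod_eqb n (km1 n k) k Hn (km1_lt' n k Hn) Hk) as E.
  unfold km1 in *. rewrite Nat.eqb_refl in E. apply Nat.eqb_eq. auto.
Qed.

Lemma km1_S n j : (0 < n)%nat -> (S j < n)%nat -> km1 n (S j) = j.
Proof. intros. unfold km1. rewrite km1_eq by auto. simpl. lia. Qed.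

Lemma edge_pos n P j : closed_curve n P -> (j < n)%nat -> 0 < edge_len n P j.
Proof.
  intros [_ H] Hj. pose proof (H j Hj). unfold edge_len, pnorm in *.
  pose proof (sqrt_pos (fst (psub (pidx n P (j + 1)) (pidx n P j)) ^ 2 + snd (psub (pidx n P (j + 1)) (pidx n P j)) ^ 2)). lra.
Qed.

Lemma Wv_unit n P j : closed_curve n P -> (j < n)%nat ->
  fst (Wv n P j) ^ 2 + snd (Wv n P j) ^ 2 = 1.
Proof.
  intros Hc Hj. pose proof (edge_pos n P j Hc Hj) as Hp. unfold Wv, edge_len, pnorm in *.
  destruct (psub (pidx n P (j + 1)) (pidx n P j)) as [x y]. unfold pscale; cbn [fst snd] in *.
  assert (E: sqrt (x^2+y^2) * sqrt (x^2+y^2) = x^2+y^2) by (apply sqrt_sqrt; nra).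
  set (q := sqrt (x^2+y^2)) in *.
  replace ((/ q * x) ^ 2 + (/ q * y) ^ 2) with ((x^2+y^2) / (q*q)) by (field; lra).
  rewrite E. field. nra.
Qed.

Lemma sig_facts sigma : sigma = 1 \/ sigma = -1 ->
  cos (sigma * (PI/2)) = 0 /\ sin (sigma * (PI/2)) = sigma /\ sigma * sigma = 1 /\
  (forall x, cos (sigma * x) = cos x) /\ (forall x, sin (sigma * x) = sigma * sin x).
Proof.
  intros [->| ->].
  - rewrite Rmult_1_l, cos_PI2, sin_PI2. repeat split; try ring; intros; rewrite Rmult_1_l; ring.
  - replace (-1 * (PI/2)) with (- (PI/2)) by ring. rewrite cos_neg, sin_neg, cos_PI2, sin_PI2.
    repeat split; try ring; intros; replace (-1 * x) with (-x) by ring; rewrite ?cos_neg, ?sin_neg; ring.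
Qed.

Lemma local n P k sigma kappa : closed_curve n P -> (k < n)%nat -> sigma = 1 \/ sigma = -1 ->
  padd (grad_at (Length n) P k) (pscale kappa (grad_at (Vol sigma n) P k)) =
  (fst (Wv n P (km1 n k)) - fst (Wv n P k)
     - kappa * sigma / 2 * (edge_len n P (km1 n k) * snd (Wv n P (km1 n k)) + edge_len n P k * snd (Wv n P k)),
   snd (Wv n P (km1 n k)) - snd (Wv n P k)
     + kappa * sigma / 2 * (edge_len n P (km1 n k) * fst (Wv n P (km1 n k)) + edge_len n P k * fst (Wv n P k))).
Proof.
  intros Hc Hk Hs.
  assert (Hn : (0 < n)%nat) by (destruct Hc; lia).
  rewrite (grad_pair (Length n) P k _ _ (grad_L n P k Hc Hk 1 0) (grad_L n P k Hc Hk 0 1)).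
  rewrite (grad_pair (Vol sigma n) P k _ _ (grad_V n P k Hc Hk sigma 1 0) (grad_V n P k Hc Hk sigma 0 1)).
  destruct (sig_facts sigma Hs) as (cs & sn & _).
  rewrite cs, sn.
  pose proof (edge_pos n P k Hc Hk) as Pk.
  pose proof (edge_pos n P (km1 n k) Hc (km1_lt' n k Hn)) as Pm.
  pose proof (pidx_km1 n P k Hn Hk) as E. unfold km1 in *. rewrite E.
  unfold Wv. rewrite E.
  destruct (pidx n P k) as [B1 B2]. destruct (pidx n P (k+1)) as [C1 C2].
  destruct (pidx n P ((k + n - 1) mod n)) as [A1 A2].
  unfold padd, pscale, psub; simpl. f_equal; field; lra.
Qed.

Lemma sg_cancel sg x y : sg * sg = 1 -> sg * x = sg * y -> x = y.
Proof. intros H E. transitivity (sg*sg*x); [rewrite H; ring|]. rewrite Rmult_assoc, E, <- Rmult_assoc, H. ring. Qed.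

Theorem mainTheorem4 (sigma : R) (n : nat) (P : nat -> pt) (kappa : R) :
  (sigma = 1 \/ sigma = -1) ->
  closed_curve n P ->
  kappa <> 0 ->
  ((forall k, (k < n)%nat ->
      padd (grad_at (Length n) P k) (pscale kappa (grad_at (Vol sigma n) P k))
      = (0, 0))
   <->
   (exists l0 theta0,
      0 < l0 /\ - PI < theta0 < PI /\
      (forall k, (k < n)%nat ->
         edge_len n P k = l0 /\ is_signed_angle sigma n P k theta0) /\
      kappa * l0 = 2 * tan (theta0 / 2))).
Proof.
  intros Hs Hc Hk.
  assert (Hn : (0 < n)%nat) by (destruct Hc; lia).
  destruct (sig_facts sigma Hs) as (cs & sn & ss & ct & st).
  split.
  - intros G.
    assert (Leq : forall k, (k < n)%nat -> edge_len n P (km1 n k) = edge_len n P k).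
    { intros k Hkn. specialize (G k Hkn). rewrite local in G by auto. apply pair_equal_spec in G; destruct G as [G1 G2].
      apply (core1 (fst (Wv n P (km1 n k))) (snd (Wv n P (km1 n k))) (fst (Wv n P k)) (snd (Wv n P k))
        _ _ (kappa * sigma / 2)); auto.
      - apply Wv_unit; auto. apply km1_lt'; auto.
      - apply Wv_unit; auto.
      - apply edge_pos; auto. apply km1_lt'; auto.
      - apply edge_pos; auto.
      - intro E. assert (kappa * sigma * sigma = 0) by (replace (kappa*sigma*sigma) with (kappa*sigma/2*2*sigma) by field; rewrite E; ring).
        rewrite Rmult_assoc, ss in H. lra. }
    assert (Lall : forall j, (j < n)%nat -> edge_len n P j = edge_len n P 0).
    { induction j; intros Hj; auto. rewrite <- IHj by lia. rewrite <- (Leq (S j) Hj). rewrite km1_S; auto. }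
    set (l0 := edge_len n P 0).
    set (s := kappa * l0 / 2).
    set (th := 2 * atan s).
    pose proof (atan_bound s) as Ab.
    assert (Hl0 : 0 < l0) by (apply edge_pos; auto).
    destruct (half_angle (atan s)) as [Hc2 Hs2]; [lra|]. rewrite tan_atan in Hc2, Hs2.
    exists l0, th. split; [auto|]. split; [unfold th; lra|]. split.
    + intros k Hkn. split; [apply Lall; auto|].
      split; [unfold th; lra|].
      specialize (G k Hkn). rewrite local in G by auto. apply pair_equal_spec in G; destruct G as [G1 G2].
      rewrite (Leq k Hkn), (Lall k Hkn) in G1, G2.
      fold l0 in G1, G2.
      destruct (core2 (fst (Wv n P (km1 n k))) (snd (Wv n P (km1 n k))) (fst (Wv n P k)) (snd (Wv n P k))
        s sigma (cos th) (sin th)) as [W1 W2]; auto.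
      { etransitivity; [|exact G1]; unfold s; field. }
      { etransitivity; [|exact G2]; unfold s; field. }
      rewrite (Nat.mod_small k n Hkn).
      change (normal sigma n P k) with (rot (sigma * (PI / 2)) (Wv n P k)).
      change (normal sigma n P ((k + n - 1) mod n)) with (rot (sigma * (PI / 2)) (Wv n P (km1 n k))).
      destruct (Wv n P k) as [w1 w2]. destruct (Wv n P (km1 n k)) as [u1 u2].
      cbn [fst snd] in W1, W2. unfold rot. rewrite cs, sn, ct, st. cbn [fst snd].
      rewrite W1, W2. f_equal; ring.
    + replace (th / 2) with (atan s) by (unfold th; field). rewrite tan_atan. unfold s. field.
  - intros (l0 & th & Hl0 & Hth & Hall & Htan) k Hkn.
    rewrite local by auto.
    destruct (Hall k Hkn) as [Lk [_ Ak]].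
    destruct (Hall (km1 n k) (km1_lt' n k Hn)) as [Lm _].
    rewrite Lk, Lm.
    set (s := kappa * l0 / 2).
    assert (Ts : tan (th / 2) = s) by (unfold s; lra).
    destruct (half_angle (th / 2)) as [Hc2 Hs2]; [lra|]. rewrite Ts in Hc2, Hs2.
    replace (2 * (th / 2)) with th in Hc2, Hs2 by field.
    rewrite (Nat.mod_small k n Hkn) in Ak.
    change (normal sigma n P k) with (rot (sigma * (PI / 2)) (Wv n P k)) in Ak.
    change (normal sigma n P ((k + n - 1) mod n)) with (rot (sigma * (PI / 2)) (Wv n P (km1 n k))) in Ak.
    destruct (Wv n P k) as [w1 w2]. destruct (Wv n P (km1 n k)) as [u1 u2].
    unfold rot in Ak. rewrite cs, sn, ct, st in Ak. cbn [fst snd] in Ak |- *.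
    apply pair_equal_spec in Ak; destruct Ak as [E1 E2].
    assert (W2 : w2 = sigma * sin th * u1 + cos th * u2).
    { apply (sg_cancel sigma); auto. transitivity (-(0*w1 - sigma*w2)); [ring|]. rewrite E1. ring. }
    assert (W1 : w1 = cos th * u1 - sigma * sin th * u2).
    { apply (sg_cancel sigma); auto. transitivity (sigma*w1 + 0*w2); [ring|]. rewrite E2. ring. }
    destruct (core3 u1 u2 w1 w2 s sigma (cos th) (sin th)) as [X1 X2]; auto.
    f_equal.
    + etransitivity; [|exact X1]; unfold s; field.
    + etransitivity; [|exact X2]; unfold s; field.
Qed.
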